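(* The cofinality of $\mathfrak{hc}$ is uncountable.
   Context: A graph is a pair $(V,E)$ with $E\subseteq[V]^2$; its size is $|V|$. The chromatic number of a graph is the least cardinal $\mu$ admitting a proper coloring $c:V\to\mu$; a graph is uncountably chromatic if its chromatic number is uncountable. A graph $H$ is a minor of $G$ if there are pairwise disjoint non-empty vertex sets $(X_u)_{u\in V_H}$ of $G$, each inducing a connected subgraph, such that for each edge $\{u,v\}$ of $H$ some vertex of $X_u$ is adjacent in $G$ to some vertex of $X_v$. $K_{\omega_1}$ is the complete graph on $\omega_1$ vertices. $\mathfrak{hc}$ denotes the least size of an uncountably chromatic graph with no $K_{\omega_1}$ minor. *)

(* Defs.v *)
From Stdlib Require Import Relations Wellfounded.

Record graph := Graph {
  vert : Type;
  adj : vert -> vert -> Prop;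
  adj_sym : forall x y, adj x y -> adj y x;
  adj_irrefl : forall x, ~ adj x x }.

Definition card_le (A B : Type) : Prop := exists f : A -> B, forall x y, f x = f y -> x = y.

Definition countable (A : Type) : Prop := card_le A nat.

Definition proper_coloring (G : graph) (C : Type) (c : vert G -> C) : Prop :=
  forall x y, adj G x y -> c x <> c y.

(* chromatic number uncountable: no proper colouring with a countable set of
   colours, i.e. (every countable cardinal injects into nat) none into nat. *)
Definition uncountably_chromatic (G : graph) : Prop :=
  forall c : vert G -> nat, ~ proper_coloring G nat c.

Definition strict_well_order (W : Type) (R : W -> W -> Prop) : Prop :=
  (forall x, ~ R x x) /\
  (forall x y z, R x y -> R y z -> R x z) /\
  (forall x y, R x y \/ x = y \/ R y x) /\
  well_founded R.

Definition is_omega1 (W : Type) : Prop :=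
  ~ countable W /\
  exists R : W -> W -> Prop, strict_well_order W R /\
    forall w, countable {x : W | R x w}.

Definition connected_in (G : graph) (S : vert G -> Prop) : Prop :=
  forall x y, S x -> S y ->
    clos_refl_trans (vert G) (fun a b => S a /\ S b /\ adj G a b) x y.

Definition has_complete_minor (G : graph) (W : Type) : Prop :=
  exists X : W -> vert G -> Prop,
    (forall w, exists v, X w v) /\
    (forall w w' v, X w v -> X w' v -> w = w') /\
    (forall w, connected_in G (X w)) /\
    (forall w w', w <> w' -> exists x y, X w x /\ X w' y /\ adj G x y).

Definition has_Komega1_minor (G : graph) : Prop :=
  exists W : Type, is_omega1 W /\ has_complete_minor G W.

(* G witnesses the definition of hc: uncountably chromatic, no K_{omega_1} minor *)
Definition hc_candidate (G : graph) : Prop :=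
  uncountably_chromatic G /\ ~ has_Komega1_minor G.

(* The cardinal |V| has uncountable cofinality: in the initial-ordinal
   well-order of V (every proper initial segment of strictly smaller
   cardinality), no countable subset is cofinal. *)
Definition uncountable_cofinality (V : Type) : Prop :=
  exists R : V -> V -> Prop, strict_well_order V R /\
    (forall v, ~ card_le V {x : V | R x v}) /\
    (forall f : nat -> V, ~ (forall v, exists n, R v (f n) \/ v = f n)).

(* Main.v *)
Require Import Defs.
From Stdlib Require Import Relations Wellfounded.
From mathcomp Require Import ssreflect ssrfun ssrbool eqtype ssrnat seq choice.
From mathcomp Require Import boolp wochoice.
Lemma wo_exists_eq (V : eqType) : exists R : V -> V -> Prop, strict_well_order V R.
Proof.
have [R wR] := well_ordering_principle V.
have refl : forall x : V, R x x.
  move=> x; have [|z [[Az lb] _]] := wR (pred1 x); first by exists x; rewrite inE.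
  by move: Az; rewrite inE => /eqP zx; subst z; apply: lb; rewrite inE.
have anti : forall x y : V, R x y -> R y x -> x = y.
  move=> x y Rxy Ryx.
  have [|z [[Az lb] uz]] := wR (pred2 x y); first by exists x; rewrite inE eqxx.
  have ex : minimum_of R (pred2 x y) x.
    split; first by rewrite inE eqxx.
    by move=> w; rewrite inE => /orP[/eqP->|/eqP->].
  have ey : minimum_of R (pred2 x y) y.
    split; first by rewrite inE eqxx orbT.
    by move=> w; rewrite inE => /orP[/eqP->|/eqP->].
  by rewrite -(uz _ ex) (uz _ ey).
have tot : forall x y : V, R x y \/ R y x.
  move=> x y; have [|z [[Az lb] _]] := wR (pred2 x y); first by exists x; rewrite inE eqxx.
  move: Az; rewrite inE => /orP[/eqP zx|/eqP zy]; subst z.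
    by left; apply: lb; rewrite inE eqxx orbT.
  by right; apply: lb; rewrite inE eqxx.
have trans : forall x y z : V, R x y -> R y z -> R x z.
  move=> x y z Rxy Ryz.
  have [|m [[Am lb] _]] := wR (pred3 x y z); first by exists x; rewrite inE eqxx.
  move: Am; rewrite inE => /or3P[/eqP e|/eqP e|/eqP e]; subst m.
  - by apply: lb; rewrite inE eqxx !orbT.
  - have e : x = y by apply: anti => //; apply: lb; rewrite inE eqxx.
    by subst x.
  - have e : y = z by apply: anti => //; apply: lb; rewrite inE eqxx !orbT.
    by subst y.
exists (fun x y => R x y /\ x <> y); split; [|split; [|split]].
- by move=> x [_].
- move=> x y z [Rxy nxy] [Ryz nyz]; split; first exact: trans Rxy Ryz.
  move=> exz; subst z; apply: nxy; exact: anti.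
- move=> x y; have [->|nxy] := pselect (x = y); first by right; left.
  by case: (tot x y) => h; [left|right; right]; split => // e; apply: nxy.
- move=> a; apply: contrapT => nA.
  have [|z [[Az lb] _]] := wR [pred x | `[< ~ Acc (fun x y => R x y /\ x <> y) x >]].
    by exists a; rewrite inE; apply/asboolP.
  move: Az; rewrite inE => /asboolP; apply; constructor => y [Ryz nyz].
  apply: contrapT => ny; apply: nyz; apply: anti => //; apply: lb.
  by rewrite inE; apply/asboolP.
Qed.
Lemma wo_exists (V : Type) : exists R : V -> V -> Prop, strict_well_order V R.
Proof. exact: (wo_exists_eq {classic V}). Qed.
Definition ind (G : graph) (S : vert G -> Prop) : graph.
Proof.
refine (@Graph {x | S x} (fun a b => adj G (proj1_sig a) (proj1_sig b)) _ _).
- by move=> x y; apply: adj_sym.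
- by move=> x; apply: adj_irrefl.
Defined.

Lemma ind_no_minor (G : graph) (S : vert G -> Prop) :
  ~ has_Komega1_minor G -> ~ has_Komega1_minor (ind G S).
Proof.
move=> nG [W [oW [X [Xne [Xdis [Xcon Xadj]]]]]]; apply: nG; exists W; split => //.
exists (fun w v => exists a : vert (ind G S), proj1_sig a = v /\ X w a).
split; [|split; [|split]].
- move=> w; have [a Xa] := Xne w; by exists (proj1_sig a), a.
- move=> w w' v [a [av Xa]] [b [bv Xb]]; apply: (Xdis w w' a) => //.
  have ab : a = b.
    case: a b av bv Xa Xb => [a sa] [b sb] /= av bv _ _; subst a b.
    by apply: eq_exist.
  by rewrite ab.
- move=> w x y [a [<- Xa]] [b [<- Xb]].
  have := Xcon w a b Xa Xb; elim => [u v [Xu [Xv uv]]| u | u v z _ IH1 _ IH2].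
  + apply: rt_step; split; first by exists u.
    by split; first by exists v.
  + exact: rt_refl.
  + exact: rt_trans IH1 IH2.
- move=> w w' nw; have [a [b [Xa [Xb ab]]]] := Xadj w w' nw.
  exists (proj1_sig a), (proj1_sig b); split; first by exists a.
  by split; first by exists b.
Qed.

Lemma small_colorable (G : graph) (S : vert G -> Prop) :
  (forall H : graph, hc_candidate H -> card_le (vert G) (vert H)) ->
  ~ has_Komega1_minor G -> ~ card_le (vert G) {x | S x} ->
  exists c : {x | S x} -> nat, proper_coloring (ind G S) nat c.
Proof.
move=> min nG ncard; apply: contrapT => nc.
apply: ncard; apply: (min (ind G S)); split; last exact: ind_no_minor.
by move=> c pc; apply: nc; exists c.
Qed.

Lemma wf_min (V : Type) (R : V -> V -> Prop) (P : V -> Prop) :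
  well_founded R -> (exists x, P x) -> exists x, P x /\ forall y, R y x -> ~ P y.
Proof.
move=> wf [x Px]; apply: contrapT => nex; move: Px; elim/(well_founded_ind wf): x.
move=> x IH Px; apply: nex; exists x; split; first exact: Px.
move=> y Ryx Py; exact: IH Ryx Py.
Qed.

Lemma card_le_trans (A B C : Type) : card_le A B -> card_le B C -> card_le A C.
Proof.
move=> [f fi] [g gi]; exists (fun x => g (f x)) => x y e; exact/fi/gi.
Qed.

Lemma initial_wo (V : Type) : exists R : V -> V -> Prop,
  strict_well_order V R /\ forall v, ~ card_le V {x : V | R x v}.
Proof.
have [R0 [irr0 [tr0 [tri0 wf0]]]] := wo_exists V.
have [small|big] := pselect (forall v, ~ card_le V {x : V | R0 x v}).
  by exists R0; split.
have [v0 [[g gi] minv0]] : exists v0, card_le V {x : V | R0 x v0} /\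
    forall y, R0 y v0 -> ~ card_le V {x : V | R0 x y}.
  apply: wf_min => //; apply: contrapT => ne; apply: big => v cv.
  by apply: ne; exists v.
pose g' := fun a => proj1_sig (g a).
have g'i : forall a b, g' a = g' b -> a = b.
  move=> a b e; apply: gi; move: e; rewrite /g'.
  case: (g a) (g b) => [x hx] [y hy] /= e; subst y; exact: eq_exist.
exists (fun a b => R0 (g' a) (g' b)); split; [split; [|split; [|split]]|].
- by move=> x; apply: irr0.
- by move=> x y z; apply: tr0.
- move=> x y; case: (tri0 (g' x) (g' y)) => [h|[h|h]]; [left|right;left|right;right] => //.
  exact: g'i.
- exact: wf_inverse_image.
- move=> v [h hi]; apply: (minv0 (g' v)); first exact: (proj2_sig (g v)).
  exists (fun a => exist (fun y => R0 y (g' v)) (g' (proj1_sig (h a))) (proj2_sig (h a))).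
  move=> a b e; apply: hi; have e' := f_equal (@proj1_sig _ _) e; simpl in e'.
  have := g'i _ _ e'; case: (h a) (h b) => [x hx] [y hy] /= xy; subst y; exact: eq_exist.
Qed.

Theorem mainTheorem3 :
  forall G : graph,
    hc_candidate G ->
    (forall H : graph, hc_candidate H -> card_le (vert G) (vert H)) ->
    uncountable_cofinality (vert G).
Proof.
move=> G [uc nG] min.
have [R [[irr [tr [tri wf]]] seg]] := initial_wo (vert G).
exists R; split; first by split.
split => // f cof.
have cc : forall n, {c : {x | R x (f n)} -> nat | proper_coloring (ind G (fun x => R x (f n))) nat c}.
  move=> n; apply: cid; apply: small_colorable => //; exact: seg.
pose cc' := fun n v => match pselect (R v (f n)) with
  | left h => S (proj1_sig (cc n) (exist _ v h)) | right _ => 0 end.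
pose nv := fun v => proj1_sig (cid (cof v)).
have nvP : forall v, R v (f (nv v)) \/ v = f (nv v) := fun v => proj2_sig (cid (cof v)).
apply: (uc (fun v => pickle (nv v, cc' (nv v) v))) => x y xy e.
have [e1 e2] : nv x = nv y /\ cc' (nv x) x = cc' (nv y) y.
  by have := pcan_inj pickleK e; case.
move: e2; rewrite -e1 /cc'; set n := nv x.
case: (pselect (R x (f n))) => hx; case: (pselect (R y (f n))) => hy //.
- move=> [] e3; apply: (proj2_sig (cc n) (exist _ x hx) (exist _ y hy)) => //.
- move=> _; have hx' := nvP x; have hy' := nvP y; rewrite -/n in hx'; rewrite -e1 -/n in hy'.
  case: hx' => // ex; case: hy' => // ey; apply: (adj_irrefl G x).
  by rewrite {2}ex -ey.
Qed.
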